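(* Let $k\ge 1$ and let $D_k\in\{0,1\}^{k\times k}$ be the matrix with $\mathrm{supp}(D_k)=\{(i,i):i\in[k]\}$. A matrix $M\in\{0,1\}^{m\times n}$ avoids $D_k$ as an interval minor if and only if $M$ contains $k-1$ increasing walks $W_1,\dots,W_{k-1}$ from $(m,1)$ to $(1,n)$ such that $\mathrm{supp}(M)\subseteq W_1\cup\dots\cup W_{k-1}$.
   Context: Rows are numbered top to bottom, columns left to right; $(i,j)$ is the entry in row $i$, column $j$; $\mathrm{supp}(M)$ is the set of 1-entries; $[k]=\{1,\dots,k\}$, $(a,b]=\{a+1,\dots,b\}$. A pattern $P\in\{0,1\}^{k\times\ell}$ is an interval minor of $M\in\{0,1\}^{m\times n}$ if there are integers $0=r_0<\dots<r_k=m$ and $0=c_0<\dots<c_\ell=n$ such that for each 1-entry $(i,j)$ of $P$ the submatrix of $M$ on rows $(r_{i-1},r_i]$ and columns $(c_{j-1},c_j]$ contains a 1-entry; otherwise $M$ avoids $P$. An increasing walk from $e$ to $e'$ in $M$ is a set of entries $\{e_0,\dots,e_t\}$, $e_i=(r_i,c_i)$, with $e_0=e$, $e_t=e'$, and for each $i\in[t]$ either $r_i=r_{i-1}$ and $c_i=c_{i-1}+1$, or $r_i=r_{i-1}-1$ and $c_i=c_{i-1}$. *)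

(* Defs.v *)
From mathcomp Require Import all_boot all_algebra.
Set Implicit Arguments. Unset Strict Implicit. Unset Printing Implicit Defensive.

(* 0/1 matrices are 'M[bool]_(m,n).  Rocq indices are 0-based: the entry
   (i,j) of the paper (1-based) is  M (i-1) (j-1). *)

Definition supp (m n : nat) (M : 'M[bool]_(m, n)) (e : nat * nat) : Prop :=
  exists (a : 'I_m) (b : 'I_n), e = (a.+1, b.+1) /\ M a b.

(* The paper's block of rows (r_{i-1}, r_i] (1-based) for
   pattern row i = i0+1 is, in 0-based indexing, r_{i0} <= a < r_{i0+1}. *)
Definition interval_minor (k l m n : nat) (P : 'M[bool]_(k, l))
    (M : 'M[bool]_(m, n)) : Prop :=
  exists r c : nat -> nat,
    [/\ r 0 = 0, r k = m & (forall i, i < k -> r i < r i.+1)] /\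
    [/\ c 0 = 0, c l = n & (forall j, j < l -> c j < c j.+1)] /\
        forall (i : 'I_k) (j : 'I_l), P i j ->
          exists (a : 'I_m) (b : 'I_n),
            [/\ r i <= a < r i.+1, c j <= b < c j.+1 & M a b].

Definition avoids (k l m n : nat) (P : 'M[bool]_(k, l)) (M : 'M[bool]_(m, n))
  : Prop := ~ interval_minor P M.

Definition Dmat (k : nat) : 'M[bool]_(k, k) := \matrix_(i < k, j < k) (i == j).

Definition walk_step (p q : nat * nat) : bool :=
  ((q.1 == p.1) && (q.2 == p.2.+1)) || ((q.1.+1 == p.1) && (q.2 == p.2)).

Definition increasing_walk (e e' : nat * nat) (s : seq (nat * nat)) : bool :=
  path walk_step e s && (last e s == e').

Definition walk_set (e : nat * nat) (s : seq (nat * nat)) (x : nat * nat)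
  : Prop := x \in e :: s.

(* Main.v *)
Require Import Defs.
From mathcomp Require Import all_boot all_algebra.
From mathcomp Require Import zify.
Set Implicit Arguments. Unset Strict Implicit.

Lemma walk_head (e : nat * nat) s x :
  path walk_step e s -> x \in e :: s -> x.1 <= e.1 /\ e.2 <= x.2.
Proof.
elim: s e => [|y s IH] e /=.
  by move=> _; rewrite inE => /eqP ->.
move=> /andP [hy hp]; rewrite inE => /orP [/eqP -> //|hx].
have [h1 h2] := IH y hp hx.
clear hp hx IH; move: hy; case: e => e1 e2; case: y h1 h2 => y1 y2 /= h1 h2.
rewrite /walk_step /= => /orP [/andP [/eqP a /eqP b] | /andP [/eqP a /eqP b]]; lia.
Qed.

Lemma walk_anti (e : nat * nat) s : path walk_step e s ->
  forall x y, x \in e :: s -> y \in e :: s -> x.1 < y.1 -> x.2 < y.2 -> False.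
Proof.
elim: s e => [|z s IH] e hp x y.
  by rewrite !inE => /eqP -> /eqP ->; rewrite ltnn.
move=> hx hy h1 h2.
have hx' := walk_head hp hx; have hy' := walk_head hp hy.
move: hp => /= /andP [hz hp].
move: hx; rewrite inE => /orP [/eqP ex|hx].
  by subst x; case: hy' => a _; move: h1; rewrite ltnNge a.
move: hy; rewrite inE => /orP [/eqP ey|hy].
  by subst y; case: hx' => _ b; move: h2; rewrite ltnNge b.
exact: (IH z hp x y hx hy h1 h2).
Qed.

Definition wstep (c : nat -> nat) (p : nat * nat) : nat * nat :=
  if p.2 < c p.1 then (p.1, p.2.+1) else (p.1.-1, p.2).

Fixpoint wk (c : nat -> nat) (p : nat * nat) (N : nat) : seq (nat * nat) :=
  match N with 0 => [::] | N'.+1 => wstep c p :: wk c (wstep c p) N' end.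

Lemma wk_spec (c : nat -> nat) n (Hc1 : c 1 = n)
  (Hmono : forall i i', 0 < i -> i <= i' -> c i' <= c i) :
  forall N (p : nat * nat), 1 <= p.1 -> c p.1.+1 <= p.2 <= c p.1 ->
    p.1.-1 + (n - p.2) = N ->
  [/\ path walk_step p (wk c p N), last p (wk c p N) = (1, n) &
     forall x : nat * nat, 1 <= x.1 -> c x.1.+1 <= x.2 <= c x.1 ->
       x.1 <= p.1 -> p.2 <= x.2 -> x \in p :: wk c p N].
Proof.
elim=> [|N IH] [i j] /= hi /andP [hj1 hj2] hN.
  have ei : i = 1 by lia.
  subst i; have ej : j = n by rewrite -Hc1; lia.
  subst j; split => //.
  move=> [x1 x2] /= h1 /andP [h2 h3] h4 h5.
  have ex1 : x1 = 1 by lia.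
  subst x1; have ex2 : x2 = n by rewrite -Hc1; lia.
  by subst x2; rewrite mem_head.
have cin : c i <= n by rewrite -Hc1; apply: Hmono.
rewrite /wstep /=; case: ltnP => hc.
  have [P1 P2 P3] := IH (i, j.+1) hi (ltac:(rewrite /=; apply/andP; split; lia)) (ltac:(simpl; lia)).
  split.
  - by rewrite /= P1 /walk_step /= !eqxx.
  - exact: P2.
  - move=> [x1 x2] /= h1 /andP [h2 h3] h4 h5.
    rewrite inE; case: (boolP ((x1, x2) == (i, j))) => //= hne.
    apply: P3 => //=; first by apply/andP.
    have [e1|e1] : x1 < i \/ x1 = i by lia.
    + have := Hmono x1.+1 i (ltac:(lia)) e1; lia.
    + subst x1; have [e2|e2] : j < x2 \/ j = x2 by lia.
      * lia.
      * by subst x2; rewrite eqxx in hne.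
have ej : j = c i by lia.
have hi2 : 1 < i.
  have [e|e] : 1 < i \/ i = 1 by lia. by []. subst i; lia.
have ei : (i.-1).+1 = i by lia.
have cm : c i <= c i.-1 by apply: Hmono; lia.
have [P1 P2 P3] := IH (i.-1, j) (ltac:(simpl; lia)) (ltac:(rewrite /= ei; apply/andP; split; lia)) (ltac:(simpl; lia)).
split.
- by rewrite /= P1 /walk_step /= ei !eqxx orbT.
- exact: P2.
- move=> [x1 x2] /= h1 /andP [h2 h3] h4 h5.
  rewrite inE; case: (boolP ((x1, x2) == (i, j))) => //= hne.
  apply: P3 => //=; first by apply/andP.
  have [e1|e1] : x1 < i \/ x1 = i by lia.
    lia.
  subst x1; have ex2 : x2 = j by lia.
  by subst x2; rewrite eqxx in hne.
Qed.

Lemma walk_ok (c : nat -> nat) m n : 0 < m -> 0 < n -> c 1 = n -> c m.+1 = 1 ->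
  (forall i i', 0 < i -> i <= i' -> c i' <= c i) ->
  increasing_walk (m, 1) (1, n) (wk c (m, 1) (m.-1 + n.-1)) /\
  forall x : nat * nat, 1 <= x.1 <= m -> 1 <= x.2 -> c x.1.+1 <= x.2 <= c x.1 ->
    x \in (m, 1) :: wk c (m, 1) (m.-1 + n.-1).
Proof.
move=> hm hn Hc1 Hcm Hmono.
have cm : c m.+1 <= c m by apply: Hmono.
have [P1 P2 P3] := wk_spec Hc1 Hmono (p := (m, 1)) (N := m.-1 + n.-1) hm
  (ltac:(rewrite /= Hcm; apply/andP; split; lia)) (ltac:(simpl; lia)).
split; first by rewrite /increasing_walk P1 P2 eqxx.
move=> x /andP [h1 h2] h3 h4; apply: P3 => //.
Qed.

Definition Mb m n (M : 'M[bool]_(m, n)) (a b : nat) : bool :=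
  match (insub a : option 'I_m), (insub b : option 'I_n) with
  | Some a', Some b' => M a' b'
  | _, _ => false
  end.

Lemma MbE m n (M : 'M[bool]_(m, n)) (a : 'I_m) (b : 'I_n) : Mb M a b = M a b.
Proof. by rewrite /Mb !valK. Qed.

Lemma Mb_spec m n (M : 'M[bool]_(m, n)) a b : Mb M a b ->
  exists (a' : 'I_m) (b' : 'I_n), [/\ nat_of_ord a' = a, nat_of_ord b' = b & M a' b'].
Proof.
rewrite /Mb; case: insubP => [a' _ ea|_] //; case: insubP => [b' _ eb|_] // h.
by exists a', b'.
Qed.

Fixpoint F m n (M : 'M[bool]_(m, n)) (i j : nat) {struct i} : nat :=
  match i with
  | 0 => 0
  | i'.+1 => maxn (F M i' j) (\max_(b < j | Mb M i' b) (F M i' b).+1)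
  end.

Lemma F_mono_j m n (M : 'M[bool]_(m, n)) i j j' : j <= j' -> F M i j <= F M i j'.
Proof.
move=> hj; elim: i => [|i IH] //=.
rewrite geq_max; apply/andP; split.
  by apply: leq_trans IH (leq_maxl _ _).
apply: leq_trans (leq_maxr _ _).
apply/bigmax_leqP => b hb.
by apply: (leq_bigmax_cond (F := fun b : 'I_j' => (F M i b).+1) (widen_ord hj b)).
Qed.

Lemma F_mono m n (M : 'M[bool]_(m, n)) i i' j j' : i <= i' -> j <= j' ->
  F M i j <= F M i' j'.
Proof.
move=> hi hj; apply: leq_trans (F_mono_j M i' hj).
elim: i' hi => [|i' IH]; first by rewrite leqn0 => /eqP ->.
rewrite leq_eqVlt => /orP [/eqP -> //|hi].
by apply: leq_trans (IH hi) _ => /=; apply: leq_maxl.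
Qed.

Lemma F_pt m n (M : 'M[bool]_(m, n)) a b : Mb M a b -> F M a b < F M a.+1 b.+1.
Proof.
move=> h /=; apply: leq_trans (leq_maxr _ _).
exact: (leq_bigmax_cond (F := fun b : 'I_b.+1 => (F M a b).+1) (P := fun b : 'I_b.+1 => Mb M a b) (@ord_max b)).
Qed.

Lemma F_anti m n (M : 'M[bool]_(m, n)) a b a' b' : Mb M a b -> a < a' -> b < b' ->
  F M a b < F M a' b'.
Proof. by move=> h ha hb; apply: leq_trans (F_pt h) (F_mono M ha hb). Qed.

Definition chain m n (M : 'M[bool]_(m, n)) t i j (pa pb : nat -> nat) : Prop :=
  [/\ forall s, s < t -> Mb M (pa s) (pb s),
      forall s, s.+1 < t -> pa s < pa s.+1 /\ pb s < pb s.+1 &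
      0 < t -> pa t.-1 < i /\ pb t.-1 < j].

Lemma F_chain m n (M : 'M[bool]_(m, n)) i : forall j t, t <= F M i j ->
  exists pa pb, chain M t i j pa pb.
Proof.
elim: i => [|i IH] j t /=.
  rewrite leqn0 => /eqP ->; exists id, id; split => //.
rewrite leq_max => /orP [h|h].
  have [pa [pb [h1 h2 h3]]] := IH j t h.
  exists pa, pb; split => // ht; have [a b] := h3 ht; split => //; lia.
case: t h => [|t] h.
  by exists id, id; split.
have [/existsP [b /andP [hb ht]]|hn] := boolP [exists b : 'I_j, Mb M i b && (t.+1 <= (F M i b).+1)].
  have [pa [pb [h1 h2 h3]]] := IH b t ht.
  exists (fun s => if s == t then i else pa s), (fun s => if s == t then nat_of_ord b else pb s).
  split.
  - move=> s hs /=; case: (boolP (s == t)) => e; first exact: hb.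
    move/eqP: e => e; apply: h1; lia.
  - move=> s hs /=; have -> : (s == t) = false by apply/eqP; lia.
    case: (boolP (s.+1 == t)) => e.
      move/eqP: e => es; have [a1 a2] := h3 (ltac:(lia)); rewrite -es /= in a1 a2.
      split; [lia|lia].
    move/eqP: e => e; apply: h2; lia.
  - by move=> _; rewrite /= eqxx; split.
exfalso; move: h; rewrite leqNgt => /negP; apply.
rewrite ltnS; apply/bigmax_leqP => b hb; move/existsPn: hn => /(_ b).
by rewrite hb /= -ltnNge ltnS.
Qed.

Lemma chain_bounds m n (M : 'M[bool]_(m, n)) k i j pa pb : chain M k i j pa pb ->
  forall s, s < k -> pa s < m /\ pb s < n.
Proof.
move=> [h1 _ _] s hs; have [a [b [ea eb _]]] := Mb_spec (h1 s hs).
by rewrite -ea -eb; split.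
Qed.

Lemma chain_minor m n (M : 'M[bool]_(m, n)) k pa pb : 1 <= k ->
  chain M k m n pa pb -> interval_minor (Dmat k) M.
Proof.
move=> hk hc; have hb := chain_bounds hc; case: hc => [h1 h2 h3].
pose r s := if s == 0 then 0 else if s < k then pa s else m.
pose cc s := if s == 0 then 0 else if s < k then pb s else n.
have r1 : forall s, s < k -> r s <= pa s /\ cc s <= pb s.
  move=> s hs; rewrite /r /cc; case: eqP => [_|_]; first by [].
  by rewrite hs.
have r2 : forall s, s < k -> pa s < r s.+1 /\ pb s < cc s.+1.
  move=> s hs; rewrite /r /cc /=; case: (ltnP s.+1 k) => h.
    exact: h2.
  exact: hb.
exists r, cc; split; [|split].
- split => //; first by rewrite /r ltnn; case: eqP => // ek; rewrite ek in hk.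
  move=> s hs; have [a b] := r1 s hs; have [c d] := r2 s hs; lia.
- split => //; first by rewrite /cc ltnn; case: eqP => // ek; rewrite ek in hk.
  move=> s hs; have [a b] := r1 s hs; have [c d] := r2 s hs; lia.
move=> i j; rewrite /Dmat mxE => /eqP eij; subst j.
have [a [b [ea eb hab]]] := Mb_spec (h1 i (ltn_ord i)).
exists a, b; rewrite ea eb; split => //.
- have [x y] := r1 i (ltn_ord i); have [z w] := r2 i (ltn_ord i); apply/andP; split; lia.
- have [x y] := r1 i (ltn_ord i); have [z w] := r2 i (ltn_ord i); apply/andP; split; lia.
Qed.

Definition ccol m n (M : 'M[bool]_(m, n)) (t i : nat) : nat :=
  if i <= 1 then n else
  maxn 1 (\max_(a < m | i <= a.+1) \max_(b < n | Mb M a b && (F M a b == t)) b.+1).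

Lemma ccol_le m n (M : 'M[bool]_(m, n)) t i : 0 < n -> ccol M t i <= n.
Proof.
move=> hn; rewrite /ccol; case: ifP => // _; rewrite geq_max hn /=.
apply/bigmax_leqP => a _; apply/bigmax_leqP => b _; exact: ltn_ord.
Qed.

Lemma ccol_mono m n (M : 'M[bool]_(m, n)) t : 0 < n ->
  forall i i', 0 < i -> i <= i' -> ccol M t i' <= ccol M t i.
Proof.
move=> hn i i' hi hii.
case: (leqP i 1) => h1.
  by rewrite /ccol h1; apply: ccol_le.
rewrite /ccol (leqNgt i 1) h1 (leqNgt i' 1) (leq_trans h1 hii) /=.
rewrite geq_max leq_maxl /=; apply: leq_trans (leq_maxr _ _).
apply/bigmax_leqP => a ha; apply: (leq_bigmax_cond (F := fun a : 'I_m => \max_(b < n | Mb M a b && (F M a b == t)) b.+1)).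
exact: leq_trans hii ha.
Qed.

Lemma ccol_end m n (M : 'M[bool]_(m, n)) t : 0 < m -> ccol M t m.+1 = 1.
Proof.
move=> hm; rewrite /ccol; have -> : (m.+1 <= 1) = false by lia.
suff -> : \max_(a < m | m.+1 <= a.+1) \max_(b < n | Mb M a b && (F M a b == t)) b.+1 = 0 by [].
apply/eqP; rewrite -leqn0; apply/bigmax_leqP => a; rewrite ltnS leqNgt ltn_ord //.
Qed.

Lemma ccol_cover m n (M : 'M[bool]_(m, n)) (a : 'I_m) (b : 'I_n) :
  M a b -> ccol M (F M a b) a.+2 <= b.+1 <= ccol M (F M a b) a.+1.
Proof.
move=> hab; have hMb : Mb M a b by rewrite MbE.
apply/andP; split.
  rewrite /ccol /= geq_max /=; apply/bigmax_leqP => a' ha'; apply/bigmax_leqP => b' /andP [hb' /eqP ht].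
  rewrite ltnS leqNgt; apply/negP => hbb.
  have ha : a < a' by lia.
  by have := F_anti hMb ha hbb; rewrite ht ltnn.
rewrite /ccol; case: ifP => h1; first exact: ltn_ord.
apply: leq_trans (leq_maxr _ _).
apply: (bigmax_sup a); first exact: leqnn.
apply: (bigmax_sup b) => //; by rewrite hMb eqxx.
Qed.

Lemma cut_mono (r : nat -> nat) k : (forall s, s < k -> r s < r s.+1) ->
  forall i j, i <= j -> j <= k -> r i <= r j.
Proof.
move=> hr i j hij; elim: j hij => [|j IH]; first by rewrite leqn0 => /eqP ->.
rewrite leq_eqVlt => /orP [/eqP -> //|hij] hj.
apply: leq_trans (IH hij (ltnW hj)) (ltnW (hr j hj)).
Qed.

Theorem proposition2p3 (k m n : nat) (M : 'M[bool]_(m, n)) :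
  1 <= k -> 0 < m -> 0 < n ->
  (avoids (Dmat k) M <->
   exists W : 'I_k.-1 -> seq (nat * nat),
     (forall t, increasing_walk (m, 1) (1, n) (W t)) /\
     (forall e, supp M e -> exists t, walk_set (m, 1) (W t) e)).
Proof.
move=> hk hm hn; split.
- move=> hA.
  have Fk : forall a b, Mb M a b -> F M a b < k.-1.
    move=> a b hab; rewrite ltnNge; apply/negP => hF.
    have [a' [b' [ea eb _]]] := Mb_spec hab.
    have h1 : k <= F M m n.
      have := F_pt hab; have := F_mono M (i := a.+1) (i' := m) (j := b.+1) (j' := n).
      subst a b; rewrite !ltn_ord => /(_ isT isT); lia.
    have [pa [pb hc]] := F_chain h1.
    by apply: hA; exact: chain_minor hk hc.
  have Hw := fun t : nat => walk_ok (c := ccol M t) hm hn (erefl _) (ccol_end M t hm) (ccol_mono M t hn).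
  exists (fun t : 'I_k.-1 => wk (ccol M t) (m, 1) (m.-1 + n.-1)).
  split; first by move=> t; case: (Hw t).
  move=> e [a [b [-> hab]]].
  have ht := Fk a b (ltac:(by rewrite MbE)).
  exists (Ordinal ht); rewrite /walk_set /=.
  apply: (proj2 (Hw _)) => /=; first by rewrite ltn_ord.
    by [].
  exact: ccol_cover.
- move=> [W [hW hcov]] [r [c [[r0 rk rlt] [[c0 cl clt] hP]]]].
  have rmono := cut_mono rlt; have cmono := cut_mono clt.
  have hex : forall i : 'I_k, exists p : 'I_m * 'I_n * 'I_k.-1,
      [/\ r i <= p.1.1 < r i.+1, c i <= p.1.2 < c i.+1 &
          ((p.1.1 : nat).+1, (p.1.2 : nat).+1) \in (m, 1) :: W p.2].
    move=> i; have [a [b [h1 h2 h3]]] := hP i i (ltac:(by rewrite /Dmat mxE eqxx)).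
    have [t ht] := hcov (a.+1, b.+1) (ltac:(by exists a, b)).
    by exists (a, b, t); split.
  have [f hf] := fin_all_exists hex.
  pose g := fun i => (f i).2.
  have claim : forall i i' : 'I_k, i < i' -> g i = g i' -> False.
    move=> i i' hii hg.
    have [h1 h2 h3] := hf i; have [h1' h2' h3'] := hf i'.
    rewrite /g in hg; rewrite -hg in h3'.
    have := hW (f i).2; rewrite /increasing_walk => /andP [hp _].
    have rr := rmono i.+1 i' hii (ltnW (ltn_ord i')).
    have cc := cmono i.+1 i' hii (ltnW (ltn_ord i')).
    apply: (walk_anti hp h3 h3') => /=; lia.
  have : ~~ injectiveb g.
    apply/negP => /injectiveP hinj; have := @leq_card _ _ g hinj; rewrite !card_ord; lia.
  move/injectivePn => [i [i' hne heq]].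
  case: (ltngtP i i') => hii.
  + exact: claim hii heq.
  + exact: claim hii (esym heq).
  + by move/eqP: hne; apply; apply: val_inj.
Qed.
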